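(* For all $n\ge2$ and all $x,y\in\mathbb{B}^n$, $$\frac{1}{\sqrt2}\,\mathrm{th}\frac{\rho_{\mathbb{B}^n}(x,y)}{2}\le b_{\mathbb{B}^n,2}(x,y)\le\sqrt2\,\mathrm{th}\frac{\rho_{\mathbb{B}^n}(x,y)}{2},$$ and the constants $1/\sqrt2$ and $\sqrt2$ are the best possible.
   Context: $\mathbb{B}^n$ is the unit ball of $\mathbb{R}^n$. The hyperbolic metric of the unit ball satisfies $\mathrm{th}\frac{\rho_{\mathbb{B}^n}(x,y)}{2}=\frac{|x-y|}{\sqrt{|x-y|^2+(1-|x|^2)(1-|y|^2)}}$. For a domain $G\subsetneq\mathbb{R}^n$ and $p\ge1$, the Barrlund metric is $b_{G,p}(x,y)=\sup_{z\in\partial G}\frac{|x-y|}{(|x-z|^p+|z-y|^p)^{1/p}}$. *)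

(* Defs.v *)
From mathcomp Require Import all_boot all_order all_algebra.
From mathcomp Require Import all_classical all_reals all_analysis.
Set Implicit Arguments. Unset Strict Implicit. Unset Printing Implicit Defensive.
Import Order.TTheory GRing.Theory Num.Theory.
Local Open Scope ring_scope.
Local Open Scope classical_set_scope.

Definition enorm (R : realType) (n : nat) (x : 'rV[R]_n) : R :=
  Num.sqrt (\sum_(i < n) x ord0 i ^+ 2).

Definition unit_ball (R : realType) (n : nat) : set 'rV[R]_n :=
  [set x | enorm x < 1].
Definition unit_sphere (R : realType) (n : nat) : set 'rV[R]_n :=
  [set z | enorm z = 1].

(* th (rho_{B^n}(x,y) / 2), given by the explicit formula of the context. *)
Definition th_half_rho_ball (R : realType) (n : nat) (x y : 'rV[R]_n) : R :=
  enorm (x - y) /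
  Num.sqrt (enorm (x - y) ^+ 2 + (1 - enorm x ^+ 2) * (1 - enorm y ^+ 2)).

Definition barrlund (R : realType) (n : nat) (bdry : set 'rV[R]_n) (p : R)
  (x y : 'rV[R]_n) : R :=
  sup [set enorm (x - y) /
           powR (powR (enorm (x - z)) p + powR (enorm (z - y)) p) p^-1
      | z in bdry].

(* Main.v *)
Require Import Defs.
From mathcomp Require Import all_boot all_order all_algebra.
From mathcomp Require Import all_classical all_reals all_analysis.
From mathcomp Require Import ring lra.
Import Order.TTheory GRing.Theory Num.Theory.
Local Open Scope ring_scope.
Local Open Scope classical_set_scope.
Set Implicit Arguments.
Lemma ineqA (R : realType) (a b : R) : 0 <= a -> a < 1 -> 0 <= b -> b < 1 ->
  0 <= 2*(a+b) - (a+b)^+2 - 2*a*b + 2*a^+2*b^+2.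
Proof. move=> *.
have h1 : 0 <= (a-b)^+2 by apply: sqr_ge0.
have hP : 0 <= (1-a)*(1-b) by apply: mulr_ge0; lra.
have h2 : 0 <= (1-a)*(1-b)*(2*a*b) by apply: mulr_ge0 => //; nra.
have h3 : 0 <= (1-a)*(1-b)*(1-(1-a)*(1-b)) by apply: mulr_ge0 => //; nra.
nra. Qed.

Lemma ineqB (R : realType) (a b : R) : 0 <= a -> a < 1 -> 0 <= b -> b < 1 ->
  0 <= 2*a^+2+2*b^+2+2*a*b+3-4*a-4*b-a^+2*b^+2.
Proof. move=> *.
have h1 : 0 <= (a-b)^+2 by apply: sqr_ge0.
have hP : 0 <= (1-a)*(1-b) by apply: mulr_ge0; lra.
have h2 : 0 <= (1-a)*(1-b)*(2*((1-a)+(1-b))-(1-a)*(1-b)) by apply: mulr_ge0 => //; nra.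
nra. Qed.

Lemma ineqE2D {R : realType} (a b s : R) : 0 <= a -> a < 1 -> 0 <= b -> b < 1 ->
  0 <= s -> s <= a + b ->
  a^+2+b^+2+2-2*s <= 2*((2*a^+2+2*b^+2-s^+2) + (1-a^+2)*(1-b^+2)).
Proof. move=> ha ha1 hb hb1 hs hsu.
have hA := @ineqA R a b ha ha1 hb hb1.
have f0 : 0 <= a^+2+b^+2+2*a^+2*b^+2 by nra.
have h1 : 0 <= s * (2*(a+b) - (a+b)^+2 - 2*a*b + 2*a^+2*b^+2) by apply: mulr_ge0.
have h2 : 0 <= (a+b-s) * (a^+2+b^+2+2*a^+2*b^+2) by apply: mulr_ge0 => //; lra.
have h3 : 0 <= s * (a+b-s) by apply: mulr_ge0 => //; lra.
have [u0|up] := eqVneq (a+b) 0.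
  have s0 : s = 0 by lra.
  subst s; nra.
have upos : 0 < a + b by rewrite lt0r up /=; lra.
have : 0 <= (a+b) * (a^+2+b^+2-2*s^+2+2*s+2*a^+2*b^+2) by nra.
rewrite pmulr_rge0 //; nra.
Qed.

Lemma ineqD2E {R : realType} (a b s : R) : 0 <= a -> a < 1 -> 0 <= b -> b < 1 ->
  0 <= s -> s <= a + b ->
  (2*a^+2+2*b^+2-s^+2) + (1-a^+2)*(1-b^+2) <= 2*(a^+2+b^+2+2-2*s).
Proof. move=> ha ha1 hb hb1 hs hsu.
have hB := @ineqB R a b ha ha1 hb hb1.
have h1 : 0 <= (a+b-s)*(4-s-(a+b)) by apply: mulr_ge0; lra.
nra.
Qed.
Section V.
Context {R : realType} {n : nat}.
Implicit Types (x y z w : 'rV[R]_n).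


Definition dot x y : R := \sum_(i < n) x ord0 i * y ord0 i.

Lemma dotC x y : dot x y = dot y x.
Proof. by apply: eq_bigr => i _; rewrite mulrC. Qed.

Lemma dotDl x y z : dot (x + y) z = dot x z + dot y z.
Proof. rewrite /dot -big_split; apply: eq_bigr => i _; by rewrite !mxE mulrDl. Qed.

Lemma dotNl x z : dot (- x) z = - dot x z.
Proof. rewrite /dot -sumrN; apply: eq_bigr => i _; by rewrite !mxE mulNr. Qed.

Lemma dotBl x y z : dot (x - y) z = dot x z - dot y z.
Proof. by rewrite dotDl dotNl. Qed.

Lemma dotZl (c : R) x z : dot (c *: x) z = c * dot x z.
Proof. rewrite /dot mulr_sumr; apply: eq_bigr => i _; by rewrite !mxE mulrA. Qed.

Lemma dotDr x y z : dot z (x + y) = dot z x + dot z y.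
Proof. by rewrite dotC dotDl !(dotC z). Qed.
Lemma dotBr x y z : dot z (x - y) = dot z x - dot z y.
Proof. by rewrite dotC dotBl !(dotC z). Qed.
Lemma dotZr (c : R) x z : dot z (c *: x) = c * dot z x.
Proof. by rewrite dotC dotZl dotC. Qed.

Lemma dot_ge0 x : 0 <= dot x x.
Proof. by apply: sumr_ge0 => i _; rewrite -expr2 sqr_ge0. Qed.

Lemma enorm_sq x : enorm x ^+ 2 = dot x x.
Proof.
rewrite /enorm sqr_sqrtr; last exact: dot_ge0.
by apply: eq_bigr => i _; rewrite expr2.
Qed.

Lemma enorm_ge0 x : 0 <= enorm x.
Proof. exact: sqrtr_ge0. Qed.

Lemma dot0 x : dot x x = 0 -> forall z, dot x z = 0.
Proof.
move=> h z.
have hi : forall i : 'I_n, x ord0 i = 0.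
  move=> i; have := h; rewrite /dot => /eqP; rewrite psumr_eq0; last first.
    by move=> j _; rewrite -expr2 sqr_ge0.
  by move=> /allP /(_ i (mem_index_enum _)) /=; rewrite mulf_eq0 orbb => /eqP.
by rewrite /dot big1 // => i _; rewrite hi mul0r.
Qed.

Lemma cauchy_schwarz x y : dot x y <= enorm x * enorm y.
Proof.
set a := enorm x; set b := enorm y; set c := dot x y.
have ha : 0 <= a := enorm_ge0 x. have hb : 0 <= b := enorm_ge0 y.
have h1 : 0 <= dot (b *: x - a *: y) (b *: x - a *: y) by exact: dot_ge0.
rewrite !(dotBl, dotBr, dotZl, dotZr) -!enorm_sq -/a -/b (dotC y x) -/c in h1.
have [ab0|abp] := eqVneq (a * b) 0.
  move: ab0 => /eqP; rewrite mulf_eq0 => /orP [] /eqP h0.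
    have : dot x x = 0 by rewrite -enorm_sq -/a h0 expr0n.
    by move=> /dot0 h2; rewrite /c h2 h0 mul0r.
  have : dot y y = 0 by rewrite -enorm_sq -/b h0 expr0n.
  by move=> /dot0 h2; rewrite /c dotC h2 h0 mulr0.
have abp' : 0 < a * b by rewrite lt0r abp mulr_ge0.
nra.
Qed.

Lemma enorm_eq1 z : dot z z = 1 -> enorm z = 1.
Proof. move=> h. rewrite /enorm. have -> : \sum_(i < n) z ord0 i ^+ 2 = 1.
  by rewrite -h; apply: eq_bigr => i _; rewrite expr2.
by rewrite sqrtr1. Qed.

Lemma dot_unit z : enorm z = 1 -> dot z z = 1.
Proof. by move=> h; rewrite -enorm_sq h expr1n. Qed.

Lemma exists_unit (i0 : 'I_n) w : exists z, enorm z = 1 /\ dot w z = enorm w.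
Proof.
have [w0|wn0] := eqVneq (enorm w) 0.
  exists (delta_mx 0 i0); split; last first.
    by rewrite w0; apply: dot0; rewrite -enorm_sq w0 expr0n.
  apply: enorm_eq1; rewrite /dot (bigD1 i0) //= big1 ?addr0.
    by rewrite !mxE !eqxx mulr1.
  by move=> i /negPf hi; rewrite !mxE hi mulr0.
have wp : 0 < enorm w by rewrite lt0r wn0 enorm_ge0.
exists ((enorm w)^-1 *: w); split.
  apply: enorm_eq1; rewrite dotZl dotZr -enorm_sq.
  by field; rewrite wn0.
rewrite dotZr -enorm_sq; field; by rewrite wn0.
Qed.

Lemma sqnorm_sub x z : enorm (x - z) ^+ 2 = enorm x ^+2 - 2 * dot x z + enorm z ^+ 2.
Proof. rewrite !enorm_sq !(dotBl, dotBr) (dotC z x). ring. Qed.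

Lemma sqnorm_add x z : enorm (x + z) ^+ 2 = enorm x ^+2 + 2 * dot x z + enorm z ^+ 2.
Proof. rewrite !enorm_sq !(dotDl, dotDr) (dotC z x). ring. Qed.

Lemma dot_le_unit w z : enorm z = 1 -> dot w z <= enorm w.
Proof. move=> h; by have := cauchy_schwarz w z; rewrite h mulr1. Qed.

Lemma triangle x y : enorm (x + y) <= enorm x + enorm y.
Proof.
have h := cauchy_schwarz x y. have := sqnorm_add x y.
have := enorm_ge0 (x+y). have := enorm_ge0 x. have := enorm_ge0 y.
move=> *. nra.
Qed.

Definition Eq x y := enorm x ^+ 2 + enorm y ^+ 2 + 2 - 2 * enorm (x + y).

Lemma Eq_gt0 x y : enorm x < 1 -> enorm y < 1 -> 0 < Eq x y.
Proof. move=> hx hy; rewrite /Eq; have := triangle x y.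
have := enorm_ge0 x; have := enorm_ge0 y. move=> *. nra. Qed.

Lemma barrlund_eq (i0 : 'I_n) x y : enorm x < 1 -> enorm y < 1 ->
  barrlund (@unit_sphere R n) 2 x y = enorm (x - y) / Num.sqrt (Eq x y).
Proof.
move=> hx hy.
have Ep := @Eq_gt0 x y hx hy.
have val : forall z, enorm z = 1 ->
   enorm (x - y) / powR (powR (enorm (x - z)) 2 + powR (enorm (z - y)) 2) 2^-1
   = enorm (x - y) / Num.sqrt (Eq x y + 2 * (enorm (x + y) - dot (x + y) z)).
  move=> z hz.
  rewrite !powR_mulrn ?enorm_ge0 //.
  rewrite powR12_sqrt; last by rewrite addr_ge0 // sqr_ge0.
  congr (_ / Num.sqrt _).
  rewrite !sqnorm_sub hz /Eq dotDl (dotC z y). ring.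
rewrite /barrlund; set S := (X in sup X).
have hpos : forall z, enorm z = 1 -> 0 < Eq x y + 2 * (enorm (x + y) - dot (x + y) z).
  move=> z hz; have := @dot_le_unit (x + y) z hz; move=> *; nra.
have ub : ubound S (enorm (x - y) / Num.sqrt (Eq x y)).
  move=> r [z hz <-]; rewrite val //.
  apply: ler_wpM2l; first by rewrite enorm_ge0.
  rewrite lef_pV2 ?posrE ?sqrtr_gt0 ?hpos //.
  rewrite ler_sqrt; last exact: ltW (hpos z hz).
  have := @dot_le_unit (x + y) z hz; move=> *; nra.
have [z0 [hz0 hd0]] := exists_unit i0 (x + y).
have inS : S (enorm (x - y) / Num.sqrt (Eq x y)).
  exists z0 => //; rewrite val // hd0 subrr mulr0 addr0 //.
apply: le_anti; apply/andP; split.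
  apply: ge_sup => //; by exists (enorm (x - y) / Num.sqrt (Eq x y)).
apply: ub_le_sup => //; by exists (enorm (x - y) / Num.sqrt (Eq x y)).
Qed.

Lemma enorm_dot x : enorm x = Num.sqrt (dot x x).
Proof. by rewrite /enorm; congr Num.sqrt; apply: eq_bigr => i _; rewrite expr2. Qed.

Lemma dot_delta (i j : 'I_n) :
  dot (delta_mx 0 i : 'rV[R]_n) (delta_mx 0 j) = (i == j)%:R.
Proof.
rewrite /dot (bigD1 i) //= big1 ?addr0.
  by rewrite !mxE !eqxx mul1r eq_sym.
by move=> k /negPf hk; rewrite !mxE hk mul0r.
Qed.

Definition vec (i0 i1 : 'I_n) (a b : R) : 'rV[R]_n :=
  a *: delta_mx 0 i0 + b *: delta_mx 0 i1.

Lemma vecD i0 i1 a b c d : vec i0 i1 a b + vec i0 i1 c d = vec i0 i1 (a + c) (b + d).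
Proof. apply/rowP => j; rewrite !mxE; ring. Qed.
Lemma vecB i0 i1 a b c d : vec i0 i1 a b - vec i0 i1 c d = vec i0 i1 (a - c) (b - d).
Proof. apply/rowP => j; rewrite !mxE; ring. Qed.

Lemma enorm_vec (i0 i1 : 'I_n) a b : i0 != i1 ->
  enorm (vec i0 i1 a b) = Num.sqrt (a ^+ 2 + b ^+ 2).
Proof.
move=> h; rewrite enorm_dot /vec !(dotDl, dotDr, dotZl, dotZr) !dot_delta.
by rewrite !eqxx (negPf h) eq_sym (negPf h) /=; congr Num.sqrt; ring.
Qed.
End V.
Section L. Context {R : realType}. Implicit Types d D E c : R.
Lemma L1 d D E : 0 <= d -> 0 < D -> 0 < E -> E <= 2 * D ->
  d / Num.sqrt D / Num.sqrt 2 <= d / Num.sqrt E.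
Proof. move=> hd hD hE h.
rewrite -mulrA -invfM; apply: ler_wpM2l => //.
rewrite lef_pV2 ?posrE ?mulr_gt0 ?sqrtr_gt0 //.
rewrite -sqrtrM; last exact: ltW.
by rewrite ler_sqrt; [rewrite mulrC | rewrite mulr_ge0 // ltW].
Qed.
Lemma L2 d D E : 0 <= d -> 0 < D -> 0 < E -> D <= 2 * E ->
  d / Num.sqrt E <= Num.sqrt 2 * (d / Num.sqrt D).
Proof. move=> hd hD hE h.
rewrite mulrCA; apply: ler_wpM2l => //.
rewrite -[Num.sqrt 2](invrK) -invfM.
rewrite lef_pV2 ?posrE ?mulr_gt0 ?sqrtr_gt0 ?invr_gt0 ?sqrtr_gt0 //.
rewrite ler_pdivrMl ?sqrtr_gt0 // -sqrtrM //.
by rewrite ler_sqrt; [|rewrite mulr_ge0 // ltW].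
Qed.
Lemma L3 d D E c : 0 < d -> 0 < D -> 0 < E -> 0 < c -> c ^+ 2 * E < D ->
  c * (d / Num.sqrt D) < d / Num.sqrt E.
Proof. move=> hd hD hE hc h.
rewrite mulrCA ltr_pM2l //.
rewrite ltr_pdivrMr ?sqrtr_gt0 // mulrC ltr_pdivlMr ?sqrtr_gt0 //.
have -> : c = Num.sqrt (c ^+ 2) by rewrite sqrtr_sqr ger0_norm // ltW.
rewrite -sqrtrM; last exact: sqr_ge0.
by rewrite ltr_sqrt.
Qed.
Lemma L4 d D E c : 0 < d -> 0 < D -> 0 < E -> 0 < c -> D < c ^+ 2 * E ->
  d / Num.sqrt E < c * (d / Num.sqrt D).
Proof. move=> hd hD hE hc h.
rewrite mulrCA ltr_pM2l //.
have hsD : 0 < Num.sqrt D by rewrite sqrtr_gt0.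
have hsE : 0 < Num.sqrt E by rewrite sqrtr_gt0.
rewrite (ltr_pdivlMr _ _ hsD) mulrC (ltr_pdivrMr _ _ hsE).
have -> : c = Num.sqrt (c ^+ 2) by rewrite sqrtr_sqr ger0_norm // ltW.
rewrite -sqrtrM; last exact: sqr_ge0.
by rewrite ltr_sqrt // mulr_gt0 // exprn_gt0.
Qed.


End L.

Lemma polyU {R : realType} (u : R) : 0 < u -> u <= 1/4 ->
  (2 - 8*u) * ((1-u)^+2 + (u^+2)^+2 + ((1-u)^+2 + (- u^+2)^+2) + 2 - 2*(2*(1-u)))
  < (2*u^+2)^+2 + (1 - ((1-u)^+2 + (u^+2)^+2)) * (1 - ((1-u)^+2 + (- u^+2)^+2)).
Proof. move=> h0 h1.
have u2 : 0 < u^+2 by rewrite exprn_gt0.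
suff : 0 < u^+2 * (12*u - 8*u^+2 + 12*u^+3 - 2*u^+4 + 8*u^+5 + u^+6).
  move=> H; nra.
apply: mulr_gt0 => //. nra.
Qed.

Unset Implicit Arguments.

Theorem corollary3p6 (R : realType) (n : nat) (hn : (2 <= n)%N) :
  (forall x y : 'rV[R]_n, unit_ball x -> unit_ball y ->
     th_half_rho_ball x y / Num.sqrt 2 <= barrlund (@unit_sphere R n) 2 x y
     /\ barrlund (@unit_sphere R n) 2 x y <= Num.sqrt 2 * th_half_rho_ball x y)
  /\ (forall c : R, (Num.sqrt 2)^-1 < c ->
        exists x y : 'rV[R]_n, [/\ unit_ball x, unit_ball y &
          barrlund (@unit_sphere R n) 2 x y < c * th_half_rho_ball x y])
  /\ (forall c : R, c < Num.sqrt 2 ->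
        exists x y : 'rV[R]_n, [/\ unit_ball x, unit_ball y &
          c * th_half_rho_ball x y < barrlund (@unit_sphere R n) 2 x y]).
Proof.
have lt0n : (0 < n)%N by apply: leq_trans hn.
pose i0 : 'I_n := Ordinal lt0n.
pose i1 : 'I_n := Ordinal hn.
have i01 : i0 != i1 by [].
split.
  move=> x y; rewrite /unit_ball /= => hx hy.
  rewrite (barrlund_eq i0 x y hx hy) /th_half_rho_ball /Eq.
  have hd2 := sqnorm_sub x y. have hs2 := sqnorm_add x y.
  have tri := triangle x y.
  have ha := enorm_ge0 x. have hb := enorm_ge0 y. have hs := enorm_ge0 (x + y).
  have hd := enorm_ge0 (x - y).
  have hE := Eq_gt0 x y hx hy. rewrite /Eq in hE.
  set a := enorm x in hd2 hs2 tri ha hx hE *; set b := enorm y in hd2 hs2 tri hb hy hE *.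
  set s := enorm (x + y) in hs2 tri hs hE *; set d := enorm (x - y) in hd2 hd *.
  have d2 : d ^+ 2 = 2 * a ^+ 2 + 2 * b ^+ 2 - s ^+ 2 by lra.
  have hD : 0 < d ^+ 2 + (1 - a ^+ 2) * (1 - b ^+ 2).
    have : 0 < (1 - a ^+ 2) * (1 - b ^+ 2) by apply: mulr_gt0; nra.
    have := sqr_ge0 d; lra.
  have h1 := ineqE2D _ _ _ ha hx hb hy hs tri.
  have h2 := ineqD2E _ _ _ ha hx hb hy hs tri.
  split.
    by apply: L1 => //; rewrite d2.
  by apply: L2 => //; rewrite d2.
have r2 : Num.sqrt 2 ^+ 2 = 2 :> R by rewrite sqr_sqrtr.
have r2p : 0 < Num.sqrt (2:R) by rewrite sqrtr_gt0.
split.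
  move=> c hc.
  have cp : 0 < c by apply: lt_trans hc; rewrite invr_gt0.
  have hc2 : 1 < c * Num.sqrt 2 by rewrite -ltr_pdivrMr // mul1r.
  have hq : 1 < 2 * c ^+ 2 by nra.
  pose q := c ^+ 2.
  have qp : 0 < q by rewrite /q exprn_gt0.
  pose t := (2 * q - 1) / (4 * q).
  have ht : t * (4 * q) = 2 * q - 1 by rewrite /t; field; lra.
  have hq' : 1 < 2 * q by [].
  have t0 : 0 < t by rewrite /t divr_gt0 //; lra.
  have t1 : t < 1 / 2 by nra.
  pose x : 'rV[R]_n := vec i0 i1 t 0; pose y : 'rV[R]_n := vec i0 i1 0 0.
  have ex : enorm x = t.
    by rewrite enorm_vec // expr0n /= addr0 sqrtr_sqr gtr0_norm.
  have ey : enorm y = 0.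
    by rewrite enorm_vec // expr0n /= addr0 sqrtr0.
  have exy : enorm (x + y) = t.
    by rewrite vecD !addr0 enorm_vec // expr0n /= addr0 sqrtr_sqr gtr0_norm.
  have exmy : enorm (x - y) = t.
    by rewrite vecB !subr0 enorm_vec // expr0n /= addr0 sqrtr_sqr gtr0_norm.
  have hx : enorm x < 1 by rewrite ex; lra.
  have hy : enorm y < 1 by rewrite ey.
  exists x, y; split => //.
  rewrite (barrlund_eq i0 x y hx hy) /th_half_rho_ball /Eq ex ey exy exmy.
  apply: L4 => //.
  - nra.
  - nra.
  - rewrite -/q; nra.
have key : forall u : R, 0 < u -> u <= 1/4 -> forall c : R, c ^+ 2 <= 2 - 8 * u \/ c <= 0 ->
    exists x y : 'rV[R]_n, [/\ unit_ball x, unit_ball y &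
          c * th_half_rho_ball x y < barrlund (@unit_sphere R n) 2 x y].
  move=> u u0 u1 c hc.
  pose x : 'rV[R]_n := vec i0 i1 (1 - u) (u ^+ 2); pose y : 'rV[R]_n := vec i0 i1 (1 - u) (- u ^+ 2).
  have ex : enorm x ^+ 2 = (1-u)^+2 + (u^+2)^+2.
    by rewrite enorm_vec // sqr_sqrtr // addr_ge0 // sqr_ge0.
  have ey : enorm y ^+ 2 = (1-u)^+2 + (- u^+2)^+2.
    by rewrite enorm_vec // sqr_sqrtr // addr_ge0 // sqr_ge0.
  have exy : enorm (x + y) = 2 * (1 - u).
    rewrite vecD enorm_vec //.
    have -> : (1 - u + (1 - u)) ^+ 2 + (u ^+ 2 + - u ^+ 2) ^+ 2 = (2 * (1 - u)) ^+ 2 by ring.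
    by rewrite sqrtr_sqr ger0_norm //; lra.
  have exmy : enorm (x - y) = 2 * u ^+ 2.
    rewrite vecB enorm_vec //.
    have -> : (1 - u - (1 - u)) ^+ 2 + (u ^+ 2 - - u ^+ 2) ^+ 2 = (2 * u ^+ 2) ^+ 2 by ring.
    by rewrite sqrtr_sqr ger0_norm // mulr_ge0 // sqr_ge0.
  have m1 : (1-u)^+2 + (u^+2)^+2 < 1.
    have a1 : u ^+ 2 <= u / 4 by rewrite expr2; nra.
    have a2 : (u ^+ 2) ^+ 2 <= u ^+ 2 / 16.
      rewrite [X in X <= _]expr2; have := sqr_ge0 u; nra.
    have a3 : 0 < u ^+ 2 by rewrite exprn_gt0.
    nra.
  have hx : enorm x < 1.
    have := enorm_ge0 x; have : enorm x ^+ 2 < 1 by rewrite ex.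
    move=> *; nra.
  have hy : enorm y < 1.
    have := enorm_ge0 y; have : enorm y ^+ 2 < 1 by rewrite ey sqrrN.
    move=> *; nra.
  exists x, y; split => //.
  rewrite (barrlund_eq i0 x y hx hy) /th_half_rho_ball /Eq ex ey exy exmy.
  have hP := polyU u u0 u1.
  have u2 : 0 < u ^+ 2 by rewrite exprn_gt0.
  have hE : 0 < (1-u)^+2 + (u^+2)^+2 + ((1-u)^+2 + (- u^+2)^+2) + 2 - 2*(2*(1-u))
    by nra.
  have hD : 0 < (2*u^+2)^+2 + (1 - ((1-u)^+2 + (u^+2)^+2)) * (1 - ((1-u)^+2 + (- u^+2)^+2)).
    have : 0 < (2*u^+2)^+2 by rewrite exprn_gt0 // mulr_gt0.
    have : 0 <= (1 - ((1-u)^+2 + (u^+2)^+2)) * (1 - ((1-u)^+2 + (- u^+2)^+2)).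
      apply: mulr_ge0; nra.
    lra.
  case: (lerP c 0) => hc0.
    have hth : 0 <= 2 * u ^+ 2 / Num.sqrt ((2*u^+2)^+2 + (1 - ((1-u)^+2 + (u^+2)^+2)) * (1 - ((1-u)^+2 + (- u^+2)^+2))).
      by rewrite divr_ge0 ?sqrtr_ge0 // mulr_ge0 // sqr_ge0.
    have hb : 0 < 2 * u ^+ 2 / Num.sqrt ((1-u)^+2 + (u^+2)^+2 + ((1-u)^+2 + (- u^+2)^+2) + 2 - 2*(2*(1-u))).
      by rewrite divr_gt0 ?sqrtr_gt0 // mulr_gt0.
    have := mulr_le0_ge0 hc0 hth; lra.
  apply: L3 => //; first by rewrite mulr_gt0.
  case: hc => hc; last by lra.
  have := ler_wpM2r (ltW hE) hc; lra.
move=> c hc.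
case: (lerP c 0) => hc0.
  by apply: (key (1/4)); [lra | lra | right].
have hq : c ^+ 2 < 2 by nra.
have e8 : 8 * ((2 - c ^+ 2) / 8) = 2 - c ^+ 2 :> R by field.
apply: (key ((2 - c ^+ 2) / 8)).
- by rewrite divr_gt0 // subr_gt0.
- have := sqr_ge0 c; lra.
- left; lra.
Qed.
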